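(* Let $p$ be a prime and let $C_p=\{I\subset\mathbf{R}\mid I \text{ a subgroup with } I\cong\mathbf{Z}[1/p] \text{ as abelian groups}\}$. For $I_1,I_2\in C_p$ define $I_1\cdot I_2$ to be the subgroup of $\mathbf{R}$ generated by $\{xy\mid x\in I_1,\ y\in I_2\}$. Then $C_p$ is an abelian group under this operation. *)

(* Defs.v *)
From Stdlib Require Export Reals ZArith Znumtheory.
Open Scope R_scope.

Definition is_subgroup (A : R -> Prop) : Prop :=
  A 0 /\ (forall x y, A x -> A y -> A (x - y)).

(* Z[1/p], realized as the additive subgroup {a / p^n | a in Z, n in N} of R. *)
Definition Zinvp (p : nat) : R -> Prop :=
  fun x => exists (a : Z) (n : nat), x = IZR a / (INR p) ^ n.

Definition group_iso_sub (A B : R -> Prop) : Prop :=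
  exists f : R -> R,
    (forall x y, A x -> A y -> f (x + y) = f x + f y) /\
    (forall x, A x -> B (f x)) /\
    (forall x y, A x -> A y -> f x = f y -> x = y) /\
    (forall y, B y -> exists x, A x /\ f x = y).

Definition Cp (p : nat) (I : R -> Prop) : Prop :=
  is_subgroup I /\ group_iso_sub I (Zinvp p).

Definition gen_subgroup (S : R -> Prop) : R -> Prop :=
  fun x => forall H, is_subgroup H -> (forall s, S s -> H s) -> H x.

Definition subgroup_mul (I1 I2 : R -> Prop) : R -> Prop :=
  gen_subgroup (fun z => exists x y, I1 x /\ I2 y /\ z = x * y).

(* Main.v *)
Require Import Defs.
From Stdlib Require Import Lra Lia FunctionalExtensionality PropExtensionality.

Section S.
Variable p : nat.
Hypothesis hp0 : INR p <> 0.

Lemma ppow_nz n : INR p ^ n <> 0.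
Proof. apply pow_nonzero; exact hp0. Qed.

Lemma IZRpow n : IZR (Z.of_nat p ^ Z.of_nat n) = INR p ^ n.
Proof. rewrite <- pow_IZR, <- INR_IZR_INZ; reflexivity. Qed.

Lemma Z_0 : Zinvp p 0.
Proof. exists 0%Z, 0%nat; simpl; field. Qed.

Lemma Z_1 : Zinvp p 1.
Proof. exists 1%Z, 0%nat; simpl; field. Qed.

Lemma Z_sub x y : Zinvp p x -> Zinvp p y -> Zinvp p (x - y).
Proof.
  intros [a [n ->]] [b [m ->]].
  exists (a * Z.of_nat p ^ Z.of_nat m - b * Z.of_nat p ^ Z.of_nat n)%Z, (n+m)%nat.
  rewrite minus_IZR, !mult_IZR, !IZRpow, pow_add.
  field; split; apply ppow_nz.
Qed.

Lemma Z_mul x y : Zinvp p x -> Zinvp p y -> Zinvp p (x * y).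
Proof.
  intros [a [n ->]] [b [m ->]].
  exists (a * b)%Z, (n+m)%nat.
  rewrite !mult_IZR, pow_add.
  field; split; apply ppow_nz.
Qed.

Definition scaled (c : R) : R -> Prop := fun x => exists z, Zinvp p z /\ x = c * z.

Lemma scaled_sub c : is_subgroup (scaled c).
Proof.
  split.
  - exists 0; split; [apply Z_0 | ring].
  - intros x y [z1 [h1 ->]] [z2 [h2 ->]]. exists (z1 - z2); split; [apply Z_sub; auto | ring].
Qed.

Lemma scaled_Cp c : c <> 0 -> Cp p (scaled c).
Proof.
  intros hc. split; [apply scaled_sub|].
  exists (fun x => x / c). split; [|split; [|split]].
  - intros; field; auto.
  - intros x [z [hz ->]]. replace (c * z / c) with z by (field; auto). exact hz.
  - intros x y _ _ h. apply (Rmult_eq_reg_r (/ c)); [exact h | apply Rinv_neq_0_compat; auto].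
  - intros y hy. exists (c * y); split; [exists y; auto | field; auto].
Qed.

Lemma ext (P Q : R -> Prop) : (forall x, P x <-> Q x) -> P = Q.
Proof. intros h; apply functional_extensionality; intros x; apply propositional_extensionality; auto. Qed.

Lemma mul_scaled c d : subgroup_mul (scaled c) (scaled d) = scaled (c * d).
Proof.
  apply ext; intros x; split.
  - intros h. apply h; [apply scaled_sub|].
    intros s [x1 [y1 [[z1 [h1 ->]] [[z2 [h2 ->]] ->]]]].
    exists (z1 * z2); split; [apply Z_mul; auto | ring].
  - intros [z [hz ->]] H _ hH. apply hH. exists c, (d * z). split; [|split].
    + exists 1; split; [apply Z_1 | ring].
    + exists z; auto.
    + ring.
Qed.

Section Iso.
Variable I : R -> Prop.
Variable f : R -> R.
Hypothesis hI : is_subgroup I.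
Hypothesis hadd : forall x y, I x -> I y -> f (x + y) = f x + f y.

Lemma I_add x y : I x -> I y -> I (x + y).
Proof.
  intros hx hy. destruct hI as [h0 hs].
  replace (x + y) with (x - (0 - y)) by ring. apply hs; auto.
Qed.

Lemma I_opp x : I x -> I (- x).
Proof. intros hx. destruct hI as [h0 hs]. replace (-x) with (0 - x) by ring. auto. Qed.

Lemma f0 : f 0 = 0.
Proof.
  destruct hI as [h0 _]. pose proof (hadd 0 0 h0 h0) as h.
  rewrite Rplus_0_r in h. lra.
Qed.

Lemma fopp x : I x -> f (- x) = - f x.
Proof.
  intros hx. pose proof (hadd x (-x) hx (I_opp x hx)) as h.
  rewrite Rplus_opp_r, f0 in h. lra.
Qed.

Lemma nat_mul n x : I x -> I (INR n * x) /\ f (INR n * x) = INR n * f x.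
Proof.
  intros hx. induction n as [|n [IH1 IH2]].
  - simpl. rewrite !Rmult_0_l. split; [exact (proj1 hI) | apply f0].
  - rewrite S_INR. replace ((INR n + 1) * x) with (INR n * x + x) by ring.
    split; [apply I_add; auto|]. rewrite hadd, IH2 by auto. ring.
Qed.

Lemma int_mul a x : I x -> I (IZR a * x) /\ f (IZR a * x) = IZR a * f x.
Proof.
  intros hx. destruct (Z.le_ge_cases 0 a) as [ha|ha].
  - rewrite <- (Z2Nat.id a ha), <- INR_IZR_INZ. apply nat_mul; auto.
  - replace a with (- Z.of_nat (Z.to_nat (- a)))%Z by lia.
    rewrite opp_IZR, <- INR_IZR_INZ.
    destruct (nat_mul (Z.to_nat (-a)) x hx) as [h1 h2].
    replace (- INR (Z.to_nat (- a)) * x) with (- (INR (Z.to_nat (- a)) * x)) by ring.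
    split; [apply I_opp; auto|]. rewrite fopp, h2 by auto. ring.
Qed.
End Iso.

Lemma Cp_scaled I : Cp p I -> exists c, c <> 0 /\ I = scaled c.
Proof.
  intros [hI [f [hadd [hmap [hinj hsurj]]]]].
  destruct (hsurj 1 Z_1) as [c [hc fc]].
  assert (cnz : c <> 0).
  { intros ->. rewrite (f0 I f hI hadd) in fc. lra. }
  exists c; split; auto. apply ext; intros x; split.
  - intros hx. destruct (hmap x hx) as [a [n hfx]].
    destruct (int_mul I f hI hadd (Z.of_nat p ^ Z.of_nat n) x hx) as [h1 h2].
    destruct (int_mul I f hI hadd a c hc) as [h3 h4].
    rewrite IZRpow in h1, h2.
    assert (e : INR p ^ n * x = IZR a * c).
    { apply hinj; auto. rewrite h2, h4, hfx, fc. field. apply ppow_nz. }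
    exists (IZR a / INR p ^ n); split; [exists a, n; auto|].
    apply (Rmult_eq_reg_l (INR p ^ n)); [|apply ppow_nz]. rewrite e. field. apply ppow_nz.
  - intros [z [[a [n ->]] ->]].
    assert (hz : Zinvp p (1 / INR p ^ n)) by (exists 1%Z, n; auto).
    destruct (hsurj _ hz) as [y [hy fy]].
    destruct (int_mul I f hI hadd (Z.of_nat p ^ Z.of_nat n) y hy) as [h1 h2].
    rewrite IZRpow in h1, h2.
    assert (e : INR p ^ n * y = c).
    { apply hinj; auto. rewrite h2, fy, fc. field. apply ppow_nz. }
    destruct (int_mul I f hI hadd a y hy) as [h3 _].
    replace (c * (IZR a / INR p ^ n)) with (IZR a * y); auto.
    rewrite <- e. field. apply ppow_nz.
Qed.

End S.

Theorem proposition6p1 (p : nat) (hp : prime (Z.of_nat p)) :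
  (forall I1 I2, Cp p I1 -> Cp p I2 -> Cp p (subgroup_mul I1 I2)) /\
  (forall I1 I2 I3, Cp p I1 -> Cp p I2 -> Cp p I3 ->
     subgroup_mul (subgroup_mul I1 I2) I3 = subgroup_mul I1 (subgroup_mul I2 I3)) /\
  (forall I1 I2, Cp p I1 -> Cp p I2 -> subgroup_mul I1 I2 = subgroup_mul I2 I1) /\
  (exists E, Cp p E /\
     (forall I, Cp p I -> subgroup_mul E I = I /\ subgroup_mul I E = I) /\
     (forall I, Cp p I -> exists J, Cp p J /\
        subgroup_mul I J = E /\ subgroup_mul J I = E)).
Proof.
  assert (hp0 : INR p <> 0).
  { apply not_0_INR. intros ->. apply prime_ge_2 in hp. simpl in hp. lia. }
  split; [|split; [|split]].
  - intros I1 I2 H1 H2.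
    destruct (Cp_scaled p hp0 I1 H1) as [c [hc ->]].
    destruct (Cp_scaled p hp0 I2 H2) as [d [hd ->]].
    rewrite (mul_scaled p hp0). apply (scaled_Cp p hp0). apply Rmult_integral_contrapositive; split; auto.
  - intros I1 I2 I3 H1 H2 H3.
    destruct (Cp_scaled p hp0 I1 H1) as [c [hc ->]].
    destruct (Cp_scaled p hp0 I2 H2) as [d [hd ->]].
    destruct (Cp_scaled p hp0 I3 H3) as [e [he ->]].
    rewrite !(mul_scaled p hp0), Rmult_assoc; reflexivity.
  - intros I1 I2 H1 H2.
    destruct (Cp_scaled p hp0 I1 H1) as [c [hc ->]].
    destruct (Cp_scaled p hp0 I2 H2) as [d [hd ->]].
    rewrite !(mul_scaled p hp0), Rmult_comm; reflexivity.
  - exists (scaled p 1). split; [apply (scaled_Cp p hp0); lra|]. split.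
    + intros I H. destruct (Cp_scaled p hp0 I H) as [c [hc ->]].
      rewrite !(mul_scaled p hp0), Rmult_1_l, Rmult_1_r; auto.
    + intros I H. destruct (Cp_scaled p hp0 I H) as [c [hc ->]].
      exists (scaled p (/ c)). split; [apply (scaled_Cp p hp0); apply Rinv_neq_0_compat; auto|].
      rewrite !(mul_scaled p hp0), Rinv_r, Rinv_l; auto.
Qed.
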